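(* Let $A=(a_{ij}), B=(b_{ij})\in\mathbb{R}^{n\times n}_+$ be extended Leslie matrices, i.e. entrywise nonnegative matrices whose only possibly nonzero entries are those in the first row, the subdiagonal entries $(i,i-1)$ for $2\le i\le n$, and the $(n,n)$ entry. Define $m_{i,i-1}=\max\{a_{i,i-1},b_{i,i-1}\}$ for $2\le i\le n$ and $m_{nn}=\max\{a_{nn},b_{nn}\}$. Let $S_1$ be the matrix whose first row equals the first row of $A$, whose $(i,i-1)$ entries are $m_{i,i-1}$ for $2\le i\le n$, whose $(n,n)$ entry is $m_{nn}$, and all other entries zero; let $S_2$ be defined identically but with first row equal to the first row of $B$. Assume $S_1$ and $S_2$ are both Schur-stable. Let $\mathcal{L}_{A,B}$ be the set of entrywise nonnegative matrices $D\in\mathbb{R}^{n\times n}$ whose only possibly nonzero entries are the subdiagonal entries $d_{i,i-1}$ ($2\le i\le n$) and the entry $d_{nn}$, and such that $A-D\ge 0$ and $B-D\ge 0$ entrywise. Then for every $D\in\mathcal{L}_{A,B}$ the matrix $$M=\begin{pmatrix} A-D & D\\ D & B-D\end{pmatrix}$$ is Schur-stable.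
   Context: A real square matrix is Schur-stable if its spectral radius is strictly less than $1$. $\mathbb{R}^{n\times n}_+$ denotes the set of entrywise nonnegative $n\times n$ real matrices; inequalities between matrices are entrywise. *)

(* Defs.v *)
From HB Require Import structures.
From mathcomp Require Import all_boot all_order all_algebra.
From mathcomp Require Import complex.
From mathcomp Require Import reals.
Set Implicit Arguments. Unset Strict Implicit. Unset Printing Implicit Defensive.
Import Order.TTheory GRing.Theory Num.Theory.
Local Open Scope ring_scope.
Local Open Scope complex_scope.

(* Indices are 0-based: paper row i (1..n) is ordinal i-1. *)

Definition nonneg_mx (R : realType) m n (A : 'M[R]_(m, n)) : Prop :=
  forall i j, 0 <= A i j.

Definition ext_leslie_pos n (i j : 'I_n) : bool :=
  [|| (i == 0 :> nat), (i == j.+1 :> nat) | ((i == n.-1 :> nat) && (j == n.-1 :> nat))].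

Definition ext_leslie (R : realType) n (A : 'M[R]_n) : Prop :=
  nonneg_mx A /\ forall i j, ~~ ext_leslie_pos i j -> A i j = 0.

Definition subdiag_nn_pos n (i j : 'I_n) : bool :=
  (i == j.+1 :> nat) || ((i == n.-1 :> nat) && (j == n.-1 :> nat)).

Definition S_mx (R : realType) n (F A B : 'M[R]_n) : 'M[R]_n :=
  \matrix_(i, j)
    if (i == n.-1 :> nat) && (j == n.-1 :> nat) then Num.max (A i j) (B i j)
    else if (i == 0 :> nat) then F i j
    else if (i == j.+1 :> nat) then Num.max (A i j) (B i j)
    else 0.

Definition L_AB (R : realType) n (A B D : 'M[R]_n) : Prop :=
  nonneg_mx D /\ (forall i j, ~~ subdiag_nn_pos i j -> D i j = 0) /\
  nonneg_mx (A - D) /\ nonneg_mx (B - D).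

Definition schur_stable (R : realType) n (A : 'M[R]_n) : Prop :=
  forall lam : R[i], eigenvalue (map_mx (fun x : R => x%:C) A) lam -> `|lam| < 1.

(* Main.v *)
Require Import Defs.
From HB Require Import structures.
From mathcomp Require Import all_boot all_order all_algebra.
From mathcomp Require Import complex.
From mathcomp Require Import reals.
From mathcomp Require Import zify ring lra.
Set Implicit Arguments. Unset Strict Implicit. Unset Printing Implicit Defensive.
Import Order.TTheory GRing.Theory Num.Theory.
Local Open Scope ring_scope.

Lemma sum_if1 (R : realType) n (k : nat) (a : R) (Y : nat -> R) :
  \sum_(j < n) (if (j == k :> nat) then a else 0) * Y j =
  if (k < n)%N then a * Y k else 0.
Proof.
case: ltnP => Hk.
  rewrite (bigD1 (Ordinal Hk)) /= ?eqxx // big1 ?addr0 // => j Hj.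
  have -> : (j == k :> nat) = false; last by rewrite mul0r.
  apply/negbTE; apply: contra Hj => /eqP Hj; apply/eqP/val_inj => /=. idtac.
  exact: Hj.
rewrite big1 // => j _; have -> : (j == k :> nat) = false; last by rewrite mul0r.
by apply/negbTE; apply: contraTneq Hk => <-; rewrite -ltnNge.
Qed.

Definition LM (R : realType) m (f s : nat -> R) (q : R) : 'M[R]_(m.+1) :=
  \matrix_(i, j) if (i == 0 :> nat) then f j else if (i == j.+1 :> nat) then s i
    else if (i == m :> nat) && (j == m :> nat) then q else 0.

Definition colv (R : realType) m (Y : nat -> R) : 'cV[R]_(m.+1) := \col_i Y i.
Definition rowv (R : realType) m (Y : nat -> R) : 'rV[R]_(m.+1) := \row_i Y i.

Section LMsec.
Variables (R : realType) (m : nat) (f s : nat -> R) (q : R).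
Hypothesis m1 : (0 < m)%N.

Lemma LM_row0 (Y : nat -> R) :
  (LM m f s q *m colv m Y) 0 0 = \sum_(j < m.+1) f j * Y j.
Proof. by rewrite mxE; apply: eq_bigr => j _; rewrite !mxE eqxx. Qed.

Lemma LM_rowi (Y : nat -> R) (i : 'I_m.+1) : (i != 0 :> nat) ->
  (LM m f s q *m colv m Y) i 0 =
  if (i < m)%N then s i * Y i.-1 else s m * Y m.-1 + q * Y m.
Proof.
move=> i0; rewrite mxE.
have E : forall j : 'I_m.+1, LM m f s q i j * colv m Y j 0 =
   (if (j == i.-1 :> nat) then s i else 0) * Y j +
   (if (j == m :> nat) then (if (i == m :> nat) then q else 0) else 0) * Y j.
  move=> j; rewrite !mxE (negbTE i0).
  have Him := ltn_ord i.
  have -> : (i == j.+1 :> nat) = (j == i.-1 :> nat).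
    by apply/idP/idP => /eqP H; apply/eqP; move: i0 => /eqP i0; lia.
  case: (boolP (j == i.-1 :> nat)) => Hj.
    have -> : (j == m :> nat) = false.
      by apply/negbTE/eqP => H; move/eqP: Hj; move: i0 => /eqP i0; lia.
    by rewrite mul0r addr0.
  by case: (j == m :> nat); case: (i == m :> nat); rewrite /= ?mul0r ?add0r.
rewrite (eq_bigr _ (fun j _ => E j)) big_split /= !sum_if1.
have Hi := ltn_ord i.
have -> : (i.-1 < m.+1)%N by move: i0 => /eqP i0; lia.
rewrite ltnS leqnn.
case: ltnP => Hlt.
  by rewrite (_ : (i == m :> nat) = false) ?mul0r ?addr0 //; apply/negbTE/eqP; lia.
have Him : nat_of_ord i = m by lia.
by rewrite Him eqxx.
Qed.

Lemma LM_col (V : nat -> R) (j : 'I_m.+1) :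
  (rowv m V *m LM m f s q) 0 j =
  V 0%N * f j + (if (j < m)%N then V j.+1 * s j.+1 else V m * q).
Proof.
rewrite mxE.
have E : forall i : 'I_m.+1, rowv m V 0 i * LM m f s q i j  =
   (if (i == 0%N :> nat) then f j else 0) * V i +
   (if (i == j.+1 :> nat) then s j.+1 else 0) * V i +
   (if (i == m :> nat) then (if (j == m :> nat) then q else 0) else 0) * V i.
  move=> i; rewrite !mxE mulrC.
  case: eqP => [Hi0|Hi0].
    rewrite Hi0 /=; rewrite (_ : (0%N == m) = false) ?mul0r ?addr0 //; apply/negbTE/eqP; lia.
  case: eqP => [Hij|Hij].
    rewrite Hij /= mul0r add0r; case: eqP => Hjm; rewrite ?mul0r ?addr0 //.
    by rewrite (_ : (j == m :> nat) = false) ?mul0r ?addr0 //; apply/negbTE/eqP; lia.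
  by rewrite !mul0r !add0r; case: eqP => //=; rewrite mul0r.
rewrite (eq_bigr _ (fun i _ => E i)) !big_split /= !sum_if1 ltnS leqnn /=.
have Hj := ltn_ord j.
rewrite ltnS; case: ltnP => Hlt.
  by rewrite (_ : (j == m :> nat) = false) ?mul0r ?addr0 1?mulrC 1?[V _ * s _]mulrC //; apply/negbTE/eqP; lia.
have Him : nat_of_ord j = m by lia.
by rewrite Him eqxx addr0 mulrC [q * _]mulrC.
Qed.

End LMsec.

Section ESec.
Local Open Scope complex_scope.

Lemma right_eig (F : fieldType) N (A : 'M[F]_N) a (x : 'cV_N) :
  x != 0 -> A *m x = a *: x -> eigenvalue A a.
Proof.
move=> xnz Hx; apply/eigenvalueP.
have : \det (a%:M - A) == 0.
  rewrite -det_tr; apply/det0P; exists x^T; first by rewrite trmx_eq0.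
  by rewrite -trmx_mul mulmxBl mul_scalar_mx Hx subrr trmx0.
case/det0P => v vnz Hv; exists v => //.
by apply/eqP; rewrite eq_sym -subr_eq0 -mul_mx_scalar -mulmxBr Hv.
Qed.

Lemma eig_C_right (R : realType) N (S : 'M[R]_N) (lam : R) (x : 'cV_N) :
  x != 0 -> S *m x = lam *: x ->
  eigenvalue (map_mx (fun y : R => y%:C) S) lam%:C.
Proof.
move=> xnz Hx; apply: (@right_eig _ _ _ _ (map_mx (fun y : R => y%:C) x)).
  by rewrite map_mx_eq0.
by rewrite -map_mxM Hx map_mxZ.
Qed.

Lemma eig_C_left (R : realType) N (S : 'M[R]_N) (lam : R) (v : 'rV_N) :
  v != 0 -> v *m S = lam *: v ->
  eigenvalue (map_mx (fun y : R => y%:C) S) lam%:C.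
Proof.
move=> vnz Hv; apply/eigenvalueP; exists (map_mx (fun y : R => y%:C) v).
  by rewrite -map_mxM Hv map_mxZ.
by rewrite map_mx_eq0.
Qed.

Lemma stable_eig_lt1 (R : realType) N (S : 'M[R]_N) (lam : R) :
  schur_stable S -> eigenvalue (map_mx (fun y : R => y%:C) S) lam%:C -> 0 <= lam -> lam < 1.
Proof.
move=> St E l0; have := St _ E.
by rewrite ger0_norm ?lecR // -ltcR.
Qed.

End ESec.

Section Key.
Variables (R : realType) (m : nat) (s : nat -> R) (q : R).
Hypothesis m1 : (0 < m)%N.
Hypothesis s0 : forall i, 0 <= s i.
Hypothesis q0 : 0 <= q.

Definition pis k := \prod_(1 <= i < k.+1) s i.

Lemma pi0 : pis 0 = 1.
Proof. by rewrite /pis big_geq. Qed.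

Lemma piS k : pis k.+1 = pis k * s k.+1.
Proof. by rewrite /pis big_nat_recr. Qed.

Lemma pi_ge0 k : 0 <= pis k.
Proof. by rewrite /pis; apply: prodr_ge0 => i _. Qed.

Definition X (lam : R) (j : nat) :=
  if j == m then pis m / (lam ^+ m.-1 * (lam - q)) else pis j / lam ^+ j.

Definition Phi (f : nat -> R) lam := \sum_(j < m.+1) f j * X lam j.

Definition P (f : nat -> R) : {poly R} :=
  'X^m * ('X - q%:P) - \sum_(j < m) (f j * pis j) *: ('X^(m.-1 - j) * ('X - q%:P))
  - (f m * pis m)%:P.

Lemma P_horner (f : nat -> R) (x : R) : (P f).[x] =
  x ^+ m * (x - q) - \sum_(j < m) (f j * pis j) * (x ^+ (m.-1 - j) * (x - q))
  - f m * pis m.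
Proof.
rewrite /P !hornerE horner_sum; congr (_ - _ - _).
by apply: eq_bigr => j _; rewrite !hornerE.
Qed.

Lemma Phi_split (f : nat -> R) (lam : R) : Phi f lam =
  \sum_(j < m) f j * pis j / lam ^+ j + f m * pis m / (lam ^+ m.-1 * (lam - q)).
Proof.
rewrite /Phi big_ord_recr /= /X eqxx; congr (_ + _); last by rewrite mulrA.
apply: eq_bigr => j _ /=; rewrite (_ : (j == m :> nat) = false) ?mulrA //.
by apply/negbTE; rewrite neq_ltn ltn_ord.
Qed.

Lemma P_eval (f : nat -> R) (lam : R) : lam != 0 -> lam != q ->
  (P f).[lam] = lam ^+ m.-1 * (lam - q) * (lam - Phi f lam).
Proof.
move=> l0 lq; have lq' : lam - q != 0 by rewrite subr_eq0.
rewrite P_horner Phi_split.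
set c := lam ^+ m.-1 * (lam - q).
rewrite [c * (_ - _)]mulrBr [c * (_ + _)]mulrDr mulr_sumr.
have -> : c * lam = lam ^+ m * (lam - q).
  by rewrite /c -{2}(prednK m1) exprS; ring.
have -> : c * (f m * pis m / c) = f m * pis m.
  by rewrite /c; field; rewrite lq' expf_neq0.
rewrite opprD addrA; congr (_ - _ - _).
apply: eq_bigr => j _.
have Hj : (j <= m.-1)%N by have := ltn_ord j; lia.
rewrite /c -{2}(subnK Hj) exprD; field; exact: expf_neq0.
Qed.

Lemma X_eig (f : nat -> R) (lam : R) : lam != 0 -> lam != q -> Phi f lam = lam ->
  LM m f s q *m colv m (X lam) = lam *: colv m (X lam).
Proof.
move=> l0 lq Hphi; have lq' : lam - q != 0 by rewrite subr_eq0.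
apply/matrixP => i j; rewrite (ord1 j) [RHS]mxE [colv _ _ _ _]mxE.
case: (boolP (i == 0 :> nat)) => Hi.
  have -> : i = 0 by apply/val_inj; apply/eqP.
  rewrite LM_row0 // -/(Phi f lam) Hphi /X /=.
  by rewrite (_ : (0 == m)%N = false) ?pi0 ?expr0 ?divr1 ?mulr1 //; lia.
rewrite LM_rowi //.
have Hi' : (i.-1 == m)%N = false by have := ltn_ord i; lia.
case: ltnP => Him.
  rewrite /X Hi' (_ : (i == m :> nat) = false); last by lia.
  have E : nat_of_ord i = (i.-1).+1 by lia.
  by rewrite E piS exprS; field; rewrite l0 expf_neq0.
have E : nat_of_ord i = m by have := ltn_ord i; lia.
rewrite E /X eqxx (_ : (m.-1 == m)%N = false); last by lia.
have Epm : pis m = pis m.-1 * s m by rewrite -{1}(prednK m1) piS (prednK m1).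
rewrite Epm; field; rewrite lq' expf_neq0 //.
Qed.

Lemma colv_X_neq0 (lam : R) : colv m (X lam) != 0.
Proof.
apply/negP => /eqP /matrixP /(_ 0 0); rewrite !mxE /X /=.
rewrite (_ : (0 == m)%N = false); last by lia.
by rewrite pi0 expr0 divr1 => /eqP; rewrite oner_eq0.
Qed.

Lemma Phi_bound (f : nat -> R) (lam : R) : (forall j, 0 <= f j) -> 1 <= lam -> q + 1 <= lam ->
  Phi f lam <= \sum_(j < m.+1) f j * pis j.
Proof.
move=> f0 l1 lq; apply: ler_sum => j _; apply: ler_wpM2l => //.
have l0 : 0 < lam by apply: lt_le_trans l1.
rewrite /X; case: eqP => [Ej|_].
  have D1 : 1 <= lam ^+ m.-1 * (lam - q).
    apply: mulr_ege1; first exact: exprn_ege1.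
    by rewrite lerBrDl.
  rewrite ler_pdivrMr ?(lt_le_trans ltr01 D1) //.
  by rewrite Ej; apply: ler_peMr => //; apply: pi_ge0.
rewrite ler_pdivrMr ?exprn_gt0 //; apply: ler_peMr; first exact: pi_ge0.
exact: exprn_ege1.
Qed.

Lemma root_eig (f : nat -> R) (a : R) : (forall j, 0 <= f j) -> schur_stable (LM m f s q) ->
  1 <= a -> q <= a -> a <= 1 + q -> (P f).[a] <= 0 -> (a = q -> (P f).[a] < 0) -> False.
Proof.
move=> f0 St a1 qa a1q Pa Paq.
set K := \sum_(j < m.+1) f j * pis j.
have K0 : 0 <= K by apply: sumr_ge0 => j _; apply: mulr_ge0 => //; apply: pi_ge0.
set b := 1 + q + K.
have b1 : 1 <= b by rewrite /b; lra.
have bq : q + 1 <= b by rewrite /b; lra.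
have b0 : b != 0 by apply/eqP; move: b1; lra.
have bqn : b != q by apply/eqP => E; move: bq; rewrite E; lra.
have Pb : 0 <= (P f).[b].
  rewrite P_eval //; apply: mulr_ge0; first apply: mulr_ge0.
  - by apply: exprn_ge0; apply: le_trans b1.
  - by move: bq; lra.
  rewrite subr_ge0; apply: le_trans (Phi_bound f0 b1 bq) _.
  by rewrite -/K /b; lra.
have ab : a <= b by rewrite /b; lra.
have [x /andP [ax xb] /rootP Px] := poly_ivt ab (introT andP (conj Pa Pb)).
have x1 : 1 <= x := le_trans a1 ax.
have x0 : x != 0 by apply/eqP; move: x1; lra.
have xq : x != q.
  apply/eqP => E; have aq : a = q by apply/eqP; rewrite eq_le qa -E ax.
  by move: (Paq aq); rewrite aq -E Px ltxx.
move: Px; rewrite P_eval // => /eqP; rewrite !mulf_eq0 expf_eq0 (negbTE x0) andbF /=.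
rewrite subr_eq0 (negbTE xq) /= subr_eq0 => /eqP Hphi.
have := stable_eig_lt1 St (eig_C_right (colv_X_neq0 x) (X_eig x0 xq (esym Hphi))).
by rewrite ltNge x1; move=> /(_ (le_trans ler01 x1)).
Qed.

End Key.

Section Key2.
Variables (R : realType) (m : nat) (s : nat -> R) (q : R).
Hypothesis m1 : (0 < m)%N.
Hypothesis s0 : forall i, 0 <= s i.
Hypothesis q0 : 0 <= q.

Lemma key (f : nat -> R) : (forall j, 0 <= f j) -> schur_stable (LM m f s q) ->
  q < 1 /\ Phi m s q f 1 < 1.
Proof.
move=> f0 St.
have q1 : q < 1.
  rewrite ltNge; apply/negP => q1.
  case: (boolP (f m == 0)) => [/eqP fm0 | fmn].
    pose e := colv m (fun k => if k == m then (1 : R) else 0).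
    have He : LM m f s q *m e = q *: e.
      apply/matrixP => i j; rewrite (ord1 j) [RHS]mxE [e _ _]mxE.
      case: (boolP (i == 0 :> nat)) => Hi.
        have -> : i = 0 by apply/val_inj; apply/eqP.
        rewrite LM_row0 //.
        under eq_bigr => k _ do rewrite mulrC.
        rewrite sum_if1 ltnSn mul1r fm0 /=.
        by rewrite (_ : (0 == m)%N = false) ?mulr0 //; lia.
      rewrite LM_rowi //.
      case: ltnP => Him.
        rewrite (_ : (i.-1 == m)%N = false); last by lia.
        by rewrite (_ : (i == m :> nat) = false) ?mulr0 //; lia.
      have E : nat_of_ord i = m by have := ltn_ord i; lia.
      rewrite E eqxx (_ : (m.-1 == m)%N = false) ?mulr0 ?add0r //; lia.
    have enz : e != 0.
      apply/negP => /eqP /matrixP /(_ ord_max 0); rewrite !mxE /= eqxx.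
      by move/eqP; rewrite oner_eq0.
    by have := stable_eig_lt1 St (eig_C_right enz He) q0; lra.
  case: (boolP (pis s m == 0)) => [/eqP pm0 | pmn].
    pose V := fun k : nat => if k == 0%N then (0 : R)
                             else (\prod_(k.+1 <= i < m.+1) s i) * q ^+ k.
    have He : rowv m V *m LM m f s q = q *: rowv m V.
      apply/matrixP => i j; rewrite (ord1 i) [RHS]mxE [rowv _ _ _ _]mxE LM_col //.
      rewrite /V eqxx mul0r add0r /=.
      case: ltnP => Hjm.
        case: (boolP (nat_of_ord j == 0%N)) => [/eqP j0|j0].
          rewrite j0 /= mulr0; move: pm0; rewrite /pis big_ltn // => pm0.
          transitivity ((s 1 * \prod_(2 <= i < m.+1) s i) * q); first ring.
          by rewrite pm0 mul0r.
        have Hl : (j.+1 < m.+1)%N by lia.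
        rewrite (big_ltn Hl) exprS; ring.
      have E : nat_of_ord j = m by have := ltn_ord j; lia.
      rewrite E (_ : (m == 0)%N = false); [exact: mulrC | lia].
    have vnz : rowv m V != 0.
      apply/negP => /eqP /matrixP /(_ 0 ord_max); rewrite !mxE /V /=.
      rewrite (_ : (m == 0)%N = false); last by lia.
      rewrite big_geq // mul1r => /eqP; rewrite expf_eq0 andbC.
      by rewrite (_ : q == 0 = false) //; apply/negbTE/eqP; lra.
    by have := stable_eig_lt1 St (eig_C_left vnz He) q0; lra.
  have Pq : (P m s q f).[q] = - (f m * pis s m).
    rewrite P_horner subrr !mulr0 big1 ?subr0 ?sub0r // => j _; by rewrite !mulr0.
  have fp : 0 < f m * pis s m.
    by apply: mulr_gt0; rewrite lt0r ?fmn ?pmn ?f0 ?pi_ge0.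
  apply: (root_eig m1 s0 q0 f0 St q1 (lexx q)); first lra.
    by rewrite Pq; lra.
  by move=> _; rewrite Pq; lra.
split => //; rewrite ltNge; apply/negP => H.
have q1' : (1 : R) != q by apply/eqP => E; move: q1; rewrite -E ltxx.
apply: (root_eig m1 s0 q0 f0 St (lexx (1:R))); [exact: ltW | by rewrite lerDl | |].
  rewrite P_eval // ?oner_neq0 // expr1n mul1r; apply: mulr_ge0_le0; lra.
by move=> E; move: q1; rewrite -E ltxx.
Qed.

End Key2.

Section Constr.
Variables (R : realType) (m : nat) (s : nat -> R) (q : R).
Hypothesis m1 : (0 < m)%N.
Hypothesis s0 : forall i, 0 <= s i.
Hypothesis q0 : 0 <= q.
Hypothesis q1 : q < 1.

Fixpoint w (d : R) (k : nat) : R := if k is k'.+1 then s k'.+1 * w d k' + d else 1.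
Fixpoint cw (k : nat) : R := if k is k'.+1 then s k'.+1 * cw k' + 1 else 0.

Lemma w_lin d k : w d k = pis s k + d * cw k.
Proof.
elim: k => [|k IH] /=; first by rewrite pi0 mulr0 addr0.
by rewrite IH piS; ring.
Qed.

Lemma w_ge0 d k : 0 <= d -> 0 <= w d k.
Proof.
move=> d0; elim: k => [|k IH] /=; first exact: ler01.
by apply: addr_ge0 => //; apply: mulr_ge0.
Qed.

Lemma cw_ge0 k : 0 <= cw k.
Proof.
elim: k => [|k IH] /=; first exact: lexx.
by apply: addr_ge0 => //; apply: mulr_ge0.
Qed.

Definition z (d : R) (j : nat) := if j == m then w d m / (1 - q) else w d j.
Definition c (j : nat) := if j == m then cw m / (1 - q) else cw j.

Lemma c_ge0 j : 0 <= c j.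
Proof.
rewrite /c; case: eqP => _; last exact: cw_ge0.
by apply: divr_ge0; [exact: cw_ge0 | rewrite subr_ge0 ltW].
Qed.

Lemma z_ge0 d j : 0 <= d -> 0 <= z d j.
Proof.
move=> d0; rewrite /z; case: eqP => _; last exact: w_ge0.
by apply: divr_ge0; [exact: w_ge0 | rewrite subr_ge0 ltW].
Qed.

Lemma z_lin d j : z d j = X m s q 1 j + d * c j.
Proof.
rewrite /z /X /c expr1n mul1r; case: eqP => _; rewrite w_lin ?expr1n ?divr1 //.
by rewrite mulrA -mulrDl.
Qed.

Lemma sum_z (f : nat -> R) d :
  \sum_(j < m.+1) f j * z d j = Phi m s q f 1 + d * \sum_(j < m.+1) f j * c j.
Proof.
rewrite /Phi mulr_sumr -big_split; apply: eq_bigr => j _ /=.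
by rewrite z_lin mulrDr mulrCA.
Qed.

Lemma z_rows (f : nat -> R) d : 0 < d -> \sum_(j < m.+1) f j * z d j < 1 ->
  forall i, (LM m f s q *m colv m (z d)) i 0 < colv m (z d) i 0.
Proof.
move=> d0 Hs i; rewrite [colv _ _ _ _]mxE.
case: (boolP (i == 0 :> nat)) => Hi.
  have -> : i = 0 by apply/val_inj; apply/eqP.
  rewrite LM_row0 // /z /= (_ : (0 == m)%N = false) //; lia.
rewrite LM_rowi //.
case: ltnP => Him.
  rewrite /z (_ : (i.-1 == m)%N = false); last by lia.
  rewrite (_ : (i == m :> nat) = false); last by lia.
  have E : nat_of_ord i = (i.-1).+1 by lia.
  by rewrite E /= ltrDl.
have E : nat_of_ord i = m by have := ltn_ord i; lia.
rewrite E /z eqxx (_ : (m.-1 == m)%N = false); last by lia.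
have wS : forall k, (0 < k)%N -> w d k = s k * w d k.-1 + d by case.
have Ew := wS m m1.
rewrite Ew -subr_gt0.
have qn : 1 - q != 0 by rewrite subr_eq0; apply/eqP => E1; move: q1; rewrite -E1 ltxx.
have -> : (s m * w d m.-1 + d) / (1 - q) -
   (s m * w d m.-1 + q * ((s m * w d m.-1 + d) / (1 - q))) = d.
  by field.
exact: d0.
Qed.

Lemma construct (f1 f2 : nat -> R) : (forall j, 0 <= f1 j) -> (forall j, 0 <= f2 j) ->
  Phi m s q f1 1 < 1 -> Phi m s q f2 1 < 1 ->
  exists zz : nat -> R, (forall j, 0 <= zz j) /\
    (forall i, (LM m f1 s q *m colv m zz) i 0 < colv m zz i 0) /\
    (forall i, (LM m f2 s q *m colv m zz) i 0 < colv m zz i 0).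
Proof.
move=> f10 f20 H1 H2.
set C1 := \sum_(j < m.+1) f1 j * c j.
set C2 := \sum_(j < m.+1) f2 j * c j.
have C10 : 0 <= C1 by apply: sumr_ge0 => j _; apply: mulr_ge0 => //; apply: c_ge0.
have C20 : 0 <= C2 by apply: sumr_ge0 => j _; apply: mulr_ge0 => //; apply: c_ge0.
set g1 := (1 - Phi m s q f1 1) / (C1 + 1).
set g2 := (1 - Phi m s q f2 1) / (C2 + 1).
have g10 : 0 < g1 by apply: divr_gt0; rewrite ?subr_gt0 //; apply: ltr_pwDr.
have g20 : 0 < g2 by apply: divr_gt0; rewrite ?subr_gt0 //; apply: ltr_pwDr.
set d := Num.min g1 g2.
have d0 : 0 < d by rewrite /d lt_min g10 g20.
have key (f : nat -> R) (C g : R) : 0 <= C -> Phi m s q f 1 < 1 ->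
    g = (1 - Phi m s q f 1) / (C + 1) -> d <= g -> Phi m s q f 1 + d * C < 1.
  move=> C0 Hf Eg dg.
  have C1n : C + 1 != 0 by apply: lt0r_neq0; apply: ltr_pwDr.
  have E2 : (1 - Phi m s q f 1) - g * C = (1 - Phi m s q f 1) / (C + 1).
    by rewrite Eg; field.
  have P2 : 0 < (1 - Phi m s q f 1) / (C + 1).
    by apply: divr_gt0; rewrite ?subr_gt0 //; apply: ltr_pwDr.
  have : d * C <= g * C by apply: ler_wpM2r.
  move: E2 P2; set u := Phi m s q f 1; set v := (1 - u) / (C + 1).
  move=> E2 P2 H; rewrite -subr_gt0.
  have -> : 1 - (u + d * C) = (1 - u - g * C) + (g * C - d * C) by ring.
  by apply: ltr_wpDr; rewrite ?subr_ge0 // E2.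
exists (z d); split; first by move=> j; apply: z_ge0; apply: ltW.
split; apply: z_rows => //; rewrite sum_z.
  by apply: (key f1 C1 g1) => //; rewrite /d ge_min lexx.
by apply: (key f2 C2 g2) => //; rewrite /d ge_min lexx orbT.
Qed.

End Constr.

Section GSec.
Local Open Scope complex_scope.

Lemma stable_of_vec (R : realType) N (M : 'M[R]_N) (x : 'cV[R]_N) :
  (forall i j, 0 <= M i j) -> (forall i, 0 <= x i 0) ->
  (forall i, (M *m x) i 0 < x i 0) -> schur_stable M.
Proof.
move=> M0 x0 Mx lam /eigenvalueP [v Hv vnz].
pose C := (fun y : R => y%:C).
have C0 : forall y : R, 0 <= y -> 0 <= y%:C by move=> y; rewrite lecR.
set T := \sum_j `|v 0 j| * (x j 0)%:C.
set U := \sum_i `|v 0 i| * ((M *m x) i 0)%:C.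
have HlT : `|lam| * T <= U.
  rewrite /T /U mulr_sumr.
  have -> : \sum_i `|v 0 i| * ((M *m x) i 0)%:C =
            \sum_j (\sum_i `|v 0 i| * (M i j)%:C) * (x j 0)%:C.
    under eq_bigr => i _ do rewrite mxE rmorph_sum mulr_sumr.
    rewrite exchange_big /=; apply: eq_bigr => j _.
    rewrite mulr_suml; apply: eq_bigr => i _.
    by rewrite rmorphM mulrA.
  apply: ler_sum => j _; rewrite mulrA; apply: ler_wpM2r; first exact: C0.
  move/rowP: Hv => /(_ j); rewrite !mxE => E.
  rewrite -normrM -E; apply: le_trans (ler_norm_sum _ _ _) _.
  apply: ler_sum => i _; rewrite !mxE normrM (ger0_norm (C0 _ (M0 i j))).
  by [].
have HUT : U < T.
  rewrite -subr_gt0 /T /U -sumrB.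
  have [i0 vi0] : exists i0, v 0 i0 != 0.
    apply/existsP; move: vnz; apply: contraR; rewrite negb_exists => /forallP H.
    by apply/eqP/rowP => i; rewrite mxE; apply/eqP; move: (H i); rewrite negbK.
  rewrite (bigD1 i0) //=; apply: ltr_wpDr.
    apply: sumr_ge0 => i _; rewrite -mulrBr; apply: mulr_ge0 => //.
    by rewrite -rmorphB /= C0 // subr_ge0 ltW.
  rewrite -mulrBr; apply: mulr_gt0; first by rewrite normr_gt0.
  by rewrite -rmorphB /= ltcR subr_gt0.
have T0 : 0 < T.
  apply: le_lt_trans HUT; apply: le_trans HlT; apply: mulr_ge0 => //.
  by apply: sumr_ge0 => j _; apply: mulr_ge0 => //; apply: C0.
by rewrite -(ltr_pM2r T0) mul1r; apply: le_lt_trans HUT.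
Qed.

End GSec.

Lemma S_LM (R : realType) m (F A B : 'M[R]_(m.+1)) : (0 < m)%N ->
  S_mx F A B = LM m (fun k => F 0 (inord k))
    (fun k => Num.max (A (inord k) (inord k.-1)) (B (inord k) (inord k.-1)))
    (Num.max (A ord_max ord_max) (B ord_max ord_max)).
Proof.
move=> m1; apply/matrixP => i j; rewrite !mxE /=.
case: (boolP (i == 0 :> nat)) => Hi.
  rewrite (_ : (i == m :> nat) = false) /=; last by move/eqP: Hi; lia.
  have -> : i = 0 by apply/val_inj; apply/eqP.
  by rewrite inord_val.
case: (boolP (i == j.+1 :> nat)) => Hij.
  rewrite (_ : (i == m :> nat) && (j == m :> nat) = false) /=; last first.
    by apply/negbTE; apply/nandP; right; apply/eqP; move/eqP: Hij; have := ltn_ord i; lia.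
  have -> : (inord i.-1 : 'I_m.+1) = j by apply/val_inj; rewrite /= inordK; move/eqP: Hij; have := ltn_ord i; have := ltn_ord j; lia.
  by rewrite inord_val.
case: (boolP ((i == m :> nat) && (j == m :> nat))) => // /andP [/eqP Him /eqP Hjm].
have -> : i = ord_max by apply/val_inj.
by have -> : j = ord_max by apply/val_inj.
Qed.

Lemma S_ge (R : realType) n (F A B C : 'M[R]_n) :
  (forall i j, ~~ ext_leslie_pos i j -> C i j = 0) ->
  (forall i j, 0 <= C i j) ->
  (forall i j, C i j <= Num.max (A i j) (B i j)) ->
  (forall (i j : 'I_n), (i == 0 :> nat) -> C i j = F i j) ->
  forall i j, C i j <= S_mx F A B i j.
Proof.
move=> Cpat C0 Cmax Crow i j; rewrite mxE.
case: ifP => Hc; first exact: Cmax.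
case: ifP => Hi0; first by rewrite Crow.
case: ifP => Hij; first exact: Cmax.
by rewrite Cpat // /ext_leslie_pos Hc Hi0 Hij.
Qed.

Lemma one_dim (R : realType) (S : 'M[R]_1) : (forall i j, 0 <= S i j) -> schur_stable S ->
  forall i, (S *m colv 0 (fun _ => 1)) i 0 < colv 0 (fun _ => (1:R)) i 0.
Proof.
move=> S0 St i; rewrite (ord1 i).
have He : S *m colv 0 (fun _ => 1) = S 0 0 *: colv 0 (fun _ => (1:R)).
  apply/matrixP => a b; rewrite (ord1 a) (ord1 b) !mxE big_ord1 !mxE.
  by [].
have nz : colv 0 (fun _ => (1:R)) != 0.
  by apply/negP => /eqP /matrixP /(_ 0 0); rewrite !mxE => /eqP; rewrite oner_eq0.
have := stable_eig_lt1 St (eig_C_right nz He) (S0 0 0).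
by rewrite He !mxE mulr1.
Qed.

Unset Implicit Arguments.
Theorem proposition1 (R : realType) (n : nat) (A B : 'M[R]_n) :
  ext_leslie A -> ext_leslie B ->
  schur_stable (S_mx A A B) -> schur_stable (S_mx B A B) ->
  forall D : 'M[R]_n, L_AB A B D ->
  schur_stable (block_mx (A - D) D D (B - D)).
Proof.
move=> [A0 Apat] [B0 Bpat] St1 St2 D [D0 [Dpat [AD0 BD0]]].
have hmaxl (x y : R) : x <= Num.max x y by rewrite le_max lexx.
have hmaxr (x y : R) : y <= Num.max x y by rewrite le_max lexx orbT.
have S1ge := S_ge Apat A0 (fun i j => hmaxl (A i j) (B i j)) (fun i j _ => erefl).
have S2ge := S_ge Bpat B0 (fun i j => hmaxr (A i j) (B i j)) (fun i j _ => erefl).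
have S10 i j : 0 <= S_mx A A B i j := le_trans (A0 i j) (S1ge i j).
have S20 i j : 0 <= S_mx B A B i j := le_trans (B0 i j) (S2ge i j).
have [z [z0 [Hz1 Hz2]]] : exists z : 'cV[R]_n, (forall i, 0 <= z i 0) /\
    (forall i, (S_mx A A B *m z) i 0 < z i 0) /\
    (forall i, (S_mx B A B *m z) i 0 < z i 0).
  case: n A B A0 B0 Apat Bpat St1 St2 D D0 Dpat AD0 BD0 S1ge S2ge S10 S20 =>
     [|m] A B A0 B0 Apat Bpat St1 St2 D D0 Dpat AD0 BD0 S1ge S2ge S10 S20.
    by exists 0; split; [case | split; case].
  case: (posnP m) => [m0|m1].
    subst m; exists (colv 0 (fun _ => 1)); split.
      by move=> i; rewrite mxE ler01.
    by split; apply: one_dim.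
  set fA := fun k => A 0 (inord k).
  set fB := fun k => B 0 (inord k).
  set sM := fun k => Num.max (A (inord k) (inord k.-1)) (B (inord k) (inord k.-1)).
  set qM := Num.max (A ord_max ord_max) (B ord_max ord_max).
  rewrite !(S_LM _ _ _ m1) in St1 St2 *.
  have fA0 : forall j, 0 <= fA j by move=> j; apply: A0.
  have fB0 : forall j, 0 <= fB j by move=> j; apply: B0.
  have sM0 : forall j, 0 <= sM j by move=> j; rewrite /sM le_max A0.
  have qM0 : 0 <= qM by rewrite /qM le_max A0.
  have [q1 P1] := key m1 sM0 qM0 fA0 St1.
  have [_ P2] := key m1 sM0 qM0 fB0 St2.
  have [zz [zz0 [H1 H2]]] := construct m1 sM0 qM0 q1 fA0 fB0 P1 P2.
  exists (colv m zz); split; last by split.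
  by move=> i; rewrite mxE.
apply: (@stable_of_vec R (n + n) _ (col_mx z z)).
- move=> i j; case: (split_ordP i) => i' ->; case: (split_ordP j) => j' ->.
  + by rewrite block_mxEul.
  + by rewrite block_mxEur.
  + by rewrite block_mxEdl.
  + by rewrite block_mxEdr.
- by move=> i; case: (split_ordP i) => i' ->; rewrite ?col_mxEu ?col_mxEd.
have EM : block_mx (A - D) D D (B - D) *m col_mx z z = col_mx (A *m z) (B *m z).
  by rewrite mul_block_col !mulmxBl subrK addrC subrK.
have Hle (P Q : 'M[R]_n) : (forall i j, P i j <= Q i j) -> forall i, (P *m z) i 0 <= (Q *m z) i 0.
  move=> PQ i; rewrite !mxE; apply: ler_sum => j _; exact: ler_wpM2r.
move=> i; rewrite EM; case: (split_ordP i) => i' ->; rewrite ?col_mxEu ?col_mxEd.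
  exact: le_lt_trans (Hle _ _ S1ge i') (Hz1 i').
exact: le_lt_trans (Hle _ _ S2ge i') (Hz2 i').
Qed.
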